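(* Let $k\ge 3$ and let $D$ be a digraph on $n$ vertices with $\delta^0(D)\ge\lceil (n+k)/2\rceil-1$. Let $S=(s_1,\dots,s_k)$ be a sequence of distinct vertices of $D$, let $C$ be a longest $S$-cycle in $D$, suppose $C$ is not Hamiltonian, and let $H$ be the subdigraph of $D$ induced by $V(D)\setminus V(C)$. For $i\in\mathbb{N}$ let $F_i$ be the set of vertices of $C$ which receive an edge from at least $i$ vertices of $H$, and $T_i$ the set of vertices of $C$ which send an edge to at least $i$ vertices of $H$. Suppose $x_1,x_2\in T_3$ and $y_1,y_2\in F_3$ are distinct vertices on $C$. Then $D$ contains vertex-disjoint paths $P_1,P_2$, where $P_i$ is a directed $x_i$-$y_i$ path of length at least $2$, such that all inner vertices of $P_1$ and $P_2$ lie in $H$. Moreover, if $|H|\ge 15$ and even $x_1,x_2\in T_8$ and $y_1,y_2\in F_8$, then such paths can be found which additionally satisfy $|P_1\cup P_2|\ge |H|/6$.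
   Context: Digraphs have no loops and at most one edge in each direction between any two vertices; paths and cycles are directed; the length of a path is its number of edges, and $|P|$ denotes its number of vertices. $\delta^0(D)=\min\{\delta^+(D),\delta^-(D)\}$. An $S$-cycle is a directed cycle in $D$ encountering $s_1,\dots,s_k$ in this order. *)

(* Defs.v *)
From mathcomp Require Import all_boot.
Set Implicit Arguments. Unset Strict Implicit. Unset Printing Implicit Defensive.

(* A digraph on a finite vertex type T is a loopless relation e : rel T
   (e u v means there is an edge u -> v; at most one edge per direction). *)

Definition outdeg (T : finType) (e : rel T) (v : T) : nat := #|[set w | e v w]|.
Definition indeg (T : finType) (e : rel T) (v : T) : nat := #|[set w | e w v]|.

Definition min_semideg_ge (T : finType) (e : rel T) (m : nat) : Prop :=
  forall v : T, m <= outdeg e v /\ m <= indeg e v.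

(* A directed cycle given by the cyclic sequence of its distinct vertices
   c = [:: c_0; ...; c_{l-1}] with edges c_0->c_1->...->c_{l-1}->c_0. *)
Definition dcycle (T : finType) (e : rel T) (c : seq T) : bool :=
  [&& uniq c, 2 <= size c & cycle e c].

(* An S-cycle: a directed cycle encountering s_1, ..., s_k in this (cyclic) order. *)
Definition S_cycle (T : finType) (e : rel T) (s c : seq T) : Prop :=
  dcycle e c /\ exists i, subseq s (rot i c).

Definition Fset (T : finType) (e : rel T) (c : seq T) (i : nat) : {set T} :=
  [set v | (v \in c) && (i <= #|[set h | (h \notin c) && e h v]|)].

Definition Tset (T : finType) (e : rel T) (c : seq T) (i : nat) : {set T} :=
  [set v | (v \in c) && (i <= #|[set h | (h \notin c) && e v h]|)].

(* The directed path x :: q ++ [:: y] (q = inner vertices) is a path of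
   length >= 2 whose inner vertices all lie in H (i.e. off c). *)
Definition H_path (T : finType) (e : rel T) (c : seq T) (x y : T) (q : seq T) : bool :=
  [&& path e x (rcons q y), uniq (x :: rcons q y), q != [::]
    & all (fun v => v \notin c) q].

Definition Hsize (T : finType) (c : seq T) : nat := #|[set v : T | v \notin c]|.

(* Main.v *)
Require Import Defs.
From Stdlib Require Import Classical_Prop.
From mathcomp Require Import all_boot zify.
Set Implicit Arguments. Unset Strict Implicit. Unset Printing Implicit Defensive.

Section Generic.
Variables (T : finType) (e : rel T).
Hypothesis irr : irreflexive e.

Definition din (W : {set T}) v := #|[set u in W | e u v]|.
Definition dout (W : {set T}) u := #|[set w in W | e u w]|.
Definition rW (W : {set T}) := [rel u v | [&& u \in W, v \in W & e u v]].

Lemma avoid2 (X : {set T}) a b : 2 < #|X| -> exists x, [&& x \in X, x != a & x != b].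
Proof.
move=> h; case: (boolP [exists x, [&& x \in X, x != a & x != b]]) => [/existsP//|/existsPn H0].
have : X \subset [set a; b].
  apply/subsetP => x xX; have := H0 x; rewrite xX /= !inE.
  by case: eqP => //= _; case: eqP.
move/subset_leq_card; rewrite cards2; case: (a != b) => /=; lia.
Qed.

Lemma card_seq_pred (s : seq T) (A : pred T) : uniq s ->
  #|[set x | (x \in s) && A x]| = count A s.
Proof.
move=> us; rewrite -size_filter -(card_uniqP (filter_uniq A us)) -cardsE.
by apply: eq_card => x; rewrite !inE mem_filter andbC.
Qed.

Lemma card_split (P : pred T) (A : pred T) :
  #|[set x | A x]| = #|[set x | P x && A x]| + #|[set x | ~~ P x && A x]|.
Proof.
rewrite -(cardsID [set x | P x] [set x | A x]); congr (_ + _); apply: eq_card => x;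
by rewrite !inE andbC.
Qed.

Lemma dout_le (W : {set T}) u : u \in W -> dout W u < #|W|.
Proof.
move=> uW; rewrite /dout; apply: proper_card; apply/properP; split.
  by apply/subsetP => x; rewrite inE => /andP[].
by exists u => //; rewrite inE irr andbF.
Qed.

Lemma din_le (W : {set T}) u : u \in W -> din W u < #|W|.
Proof.
move=> uW; rewrite /din; apply: proper_card; apply/properP; split.
  by apply/subsetP => x; rewrite inE => /andP[].
by exists u => //; rewrite inE irr andbF.
Qed.

Lemma SC (W : {set T}) :
  (forall a b, a \in W -> b \in W -> connect (rW W) a b -> #|W| <= din W a + dout W b + 1) ->
  forall a b, a \in W -> b \in W -> connect (rW W) a b.
Proof.
move=> hyp.
pose R a := [set x in W | connect (rW W) a x].
pose Q b := [set x in W | connect (rW W) x b].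
have outR : forall a x, x \in R a -> dout W x < #|R a|.
  move=> a x; rewrite inE => /andP[xW ax]; rewrite /dout; apply: proper_card; apply/properP; split.
    apply/subsetP => y; rewrite !inE => /andP[yW xy]; rewrite yW /=.
    by apply: connect_trans ax (connect1 _); rewrite /= xW yW.
  by exists x; rewrite !inE ?irr ?andbF ?xW.
have inQ : forall b x, x \in Q b -> din W x < #|Q b|.
  move=> b x; rewrite inE => /andP[xW xb]; rewrite /din; apply: proper_card; apply/properP; split.
    apply/subsetP => y; rewrite !inE => /andP[yW yx]; rewrite yW /=.
    by apply: connect_trans (connect1 _) xb; rewrite /= xW yW.
  by exists x; rewrite !inE ?irr ?andbF ?xW.
have RW : forall a, R a \subset W by move=> a; apply/subsetP => x; rewrite inE => /andP[].
have QW : forall a, Q a \subset W by move=> a; apply/subsetP => x; rewrite inE => /andP[].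
have step1 : forall a, a \in W -> #|W| < #|Q a| + #|R a|.
  move=> a aW; have := hyp a a aW aW (connect0 _ _).
  have aR : a \in R a by rewrite inE aW connect0.
  have aQ : a \in Q a by rewrite inE aW connect0.
  have := outR a a aR; have := inQ a a aQ; lia.
have disj : forall X Y : {set T}, X \subset W -> Y \subset W -> #|W| < #|X| + #|Y| ->
    exists z, (z \in X) && (z \in Y).
  move=> X Y XW YW h; case: (boolP [exists z, (z \in X) && (z \in Y)]) => [/existsP//|/existsPn H0].
  have : X :&: Y = set0 by apply/setP => z; rewrite in_setI in_set0; apply/negbTE; apply: H0.
  move=> I0; have := cardsU X Y; rewrite I0 cards0 subn0 => hU.
  have : X :|: Y \subset W by rewrite subUset XW YW.
  move/subset_leq_card; lia.
move=> a b aW bW; apply/idPn => nab.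
have [z0 /andP[zQa zRb]] : exists z, (z \in Q a) && (z \in R b).
  apply: disj => //; have := step1 a aW; have := step1 b bW.
  suff : #|Q b| + #|R a| <= #|W| by lia.
  case: (boolP [exists z, (z \in Q b) && (z \in R a)]) => [/existsP[z /andP[]]|/existsPn H0].
    rewrite !inE => /andP[_ zb] /andP[_ az]; by rewrite (connect_trans az zb) in nab.
  have I0 : Q b :&: R a = set0 by apply/setP => z; rewrite in_setI in_set0; apply/negbTE; apply: H0.
  have := cardsU (Q b) (R a); rewrite I0 cards0 subn0 => hU.
  have : Q b :|: R a \subset W by rewrite subUset QW RW.
  move/subset_leq_card; lia.
move: zQa zRb; rewrite !inE => /andP[_ za] /andP[_ bz].
have ba := connect_trans bz za.
have := hyp b a bW aW ba.
have bQ : b \in Q b by rewrite inE bW connect0.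
have aR : a \in R a by rewrite inE aW connect0.
have := outR a a aR; have := inQ b b bQ.
suff : #|Q b| + #|R a| <= #|W| by lia.
case: (boolP [exists z, (z \in Q b) && (z \in R a)]) => [/existsP[z /andP[]]|/existsPn H0].
  rewrite !inE => /andP[_ zb] /andP[_ az]; by rewrite (connect_trans az zb) in nab.
have I0 : Q b :&: R a = set0 by apply/setP => z; rewrite in_setI in_set0; apply/negbTE; apply: H0.
have := cardsU (Q b) (R a); rewrite I0 cards0 subn0 => hU.
have : Q b :|: R a \subset W by rewrite subUset QW RW.
move/subset_leq_card; lia.
Qed.


Lemma path_rW_sub (W : {set T}) a r : path (rW W) a r -> {subset r <= W}.
Proof.
elim: r a => [|y r IH] a //= /andP[/and3P[_ yW _] pr] z; rewrite inE => /orP[/eqP->//|].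
exact: IH pr z.
Qed.

Lemma connect_path (W : {set T}) a b : a \in W -> connect (rW W) a b ->
  exists r, [/\ path e a r, last a r = b, uniq (a :: r) & {subset a :: r <= W}].
Proof.
move=> aW /connectP[p pp ->]; case: (shortenP pp) => p' pp' up' _.
exists p'; split=> //.
  by apply: sub_path pp' => x y /and3P[].
move=> z; rewrite inE => /orP[/eqP->//|]; exact: path_rW_sub pp' z.
Qed.

Definition com (W : {set T}) u v := [set w in W | e u w && e w v].

Lemma common3 (W : {set T}) u v : u \in W -> v \in W -> u != v -> ~~ e u v ->
  #|W| < din W v + dout W u -> 3 <= #|com W u v|.
Proof.
move=> uW vW nuv nev hd.
pose A := [set w in W | e u w]; pose B := [set w in W | e w v].
have hAB : com W u v = A :&: B.
  by apply/setP => w; rewrite !inE; case: (w \in W); case: (e u w).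
have hU := cardsU A B.
have sub : [set u; v] :|: (A :|: B) \subset W.
  rewrite !subUset !sub1set uW vW /=; apply/andP; split; apply/subsetP => x; rewrite inE => /andP[] //.
have dis : [set u; v] :&: (A :|: B) = set0.
  apply/setP => x; rewrite !inE; case: (x =P u) => [->|_]; first by rewrite irr (negbTE nev) !andbF.
  case: (x =P v) => [->|_] //=; by rewrite irr (negbTE nev) !andbF.
have := cardsU [set u; v] (A :|: B); rewrite dis cards0 subn0 cards2 nuv => h2.
move/subset_leq_card: sub; rewrite h2 hAB; rewrite /din /dout -/A -/B in hd; lia.
Qed.

End Generic.

Section P1.
Variables (T : finType) (e : rel T).
Hypothesis irr : irreflexive e.

Definition hp (H X Y : {set T}) a q :=
  [/\ a \in X, last a q \in Y, path e a q & all (fun x => x \in H) (a :: q)].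
Definition valid H X1 Y1 X2 Y2 a1 q1 a2 q2 :=
  [/\ hp H X1 Y1 a1 q1, hp H X2 Y2 a2 q2 & uniq ((a1 :: q1) ++ (a2 :: q2))].
Definition dense (H : {set T}) := forall u v, u \in H -> v \in H -> #|H| < din e H v + dout e H u.

Lemma valid_sym H X1 Y1 X2 Y2 a1 q1 a2 q2 :
  valid H X1 Y1 X2 Y2 a1 q1 a2 q2 -> valid H X2 Y2 X1 Y1 a2 q2 a1 q1.
Proof. by case=> h1 h2 u; split => //; rewrite uniq_catC. Qed.

Ltac uniqt := rewrite /= !inE ?negb_or; repeat (apply/andP; split); try (by []); try (by rewrite eq_sym).

Variables (H X1 Y1 X2 Y2 : {set T}).
Hypothesis D : dense H.
Hypotheses (sX1 : X1 \subset H) (sY1 : Y1 \subset H) (sX2 : X2 \subset H) (sY2 : Y2 \subset H).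
Hypotheses (cX1 : 2 < #|X1|) (cY1 : 2 < #|Y1|) (cX2 : 2 < #|X2|) (cY2 : 2 < #|Y2|).

Lemma inH (X : {set T}) x : X \subset H -> x \in X -> x \in H.
Proof. by move/subsetP; apply. Qed.

Lemma com3 u v : u \in H -> v \in H -> u != v -> ~~ e u v -> 3 <= #|com e H u v|.
Proof. by move=> uH vH nuv nev; apply: common3 => //; apply: D. Qed.

Lemma caseA u1 v1 : u1 \in X1 -> v1 \in Y1 -> (u1 == v1) || e u1 v1 ->
  exists a1 q1 a2 q2, valid H X1 Y1 X2 Y2 a1 q1 a2 q2.
Proof.
move=> u1X v1Y h1.
have u1H := inH sX1 u1X; have v1H := inH sY1 v1Y.
have [u2 /and3P[u2X n1 n2]] := avoid2 u1 v1 cX2.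
have [v2 /and3P[v2Y n3 n4]] := avoid2 u1 v1 cY2.
have u2H := inH sX2 u2X; have v2H := inH sY2 v2Y.
have [q2 [hq1 hq2 hq3 hq4]] : exists q2, [/\ last u2 q2 = v2, path e u2 q2,
    all (fun x => x \in H) q2 & all (fun x => (x != u1) && (x != v1)) q2 /\ uniq (u2 :: q2)].
  case: (u2 =P v2) => [<-|ne]; first by exists [::].
  case: (boolP (e u2 v2)) => h.
    exists [:: v2]; split => /=; rewrite ?h ?v2H ?n3 ?n4 //.
    by split => //; rewrite /= inE andbT; apply/eqP.
  have [w /and3P[]] := avoid2 u1 v1 (com3 u2H v2H (introN eqP ne) h).
  rewrite inE => /and3P[wH e1 e2] n5 n6.
  exists [:: w; v2]; split => /=; rewrite ?e1 ?e2 ?wH ?v2H ?n5 ?n6 ?n3 ?n4 //.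
  split => //; rewrite /= !inE negb_or andbT.
  have wv2 : w != v2 by apply/eqP => E; move: e2; rewrite E irr.
  have u2w : u2 != w by apply/eqP => E; move: e1; rewrite E irr.
  by rewrite wv2 u2w /= andbT; apply/eqP.
rewrite /valid /hp.
have nu1 : u1 \notin q2 by apply/negP => /(allP hq4.1); rewrite eqxx.
have nv1 : v1 \notin q2 by apply/negP => /(allP hq4.1); rewrite eqxx andbF.
have uq := hq4.2.
case: (u1 =P v1) h1 => [E _|ne /= h1].
  subst v1; exists u1, [::], u2, q2; split; [split|split|] => //=; rewrite ?u1H ?hq1 ?hq2 ?u2H ?hq3 //.
  by move: uq => /= /andP[-> ->]; rewrite !inE negb_or nu1 (eq_sym u1 u2) n1.
exists u1, [:: v1], u2, q2; split; [split|split|] => //=; rewrite ?u1H ?v1H ?h1 ?hq1 ?hq2 ?u2H ?hq3 //.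
move: uq => /= /andP[-> ->]; rewrite !inE !negb_or nu1 nv1 (eq_sym u1 u2) (eq_sym v1 u2) n1 n2 /= !andbT.
by apply/eqP.
Qed.


Lemma in3 (X : {set T}) a b c : 2 < #|X| -> (forall x, x \in X -> [|| x == a, x == b | x == c]) -> a \in X.
Proof.
move=> h sub; have [x /and3P[xX nb nc]] := avoid2 b c h.
by have := sub x xX; rewrite (negbTE nb) (negbTE nc) !orbF => /eqP E; rewrite -E.
Qed.

Section CaseB.
Hypothesis nl1 : forall u v, u \in X1 -> v \in Y1 -> (u != v) && ~~ e u v.
Hypothesis nl2 : forall u v, u \in X2 -> v \in Y2 -> (u != v) && ~~ e u v.

Lemma caseB_succ u1 v1 u2 v2 w1 w2 : u1 \in X1 -> v1 \in Y1 -> u2 \in X2 -> v2 \in Y2 ->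
  w1 \in com e H u1 v1 -> w2 \in com e H u2 v2 ->
  [&& u2 != u1, u2 != v1, v2 != u1 & v2 != v1] ->
  [&& w1 != u2, w1 != v2 & w1 != w2] -> (w2 != u1) && (w2 != v1) ->
  exists a1 q1 a2 q2, valid H X1 Y1 X2 Y2 a1 q1 a2 q2.
Proof.
move=> u1X v1Y u2X v2Y; rewrite !inE => /and3P[w1H e1 e2] /and3P[w2H e3 e4].
move=> /and4P[n1 n2 n3 n4] /and3P[n5 n6 n7] /andP[n8 n9].
have /andP[n10 _] := nl1 u1X v1Y; have /andP[n11 _] := nl2 u2X v2Y.
have n12 : u1 != w1 by apply/eqP => E; move: e1; rewrite E irr.
have n13 : w1 != v1 by apply/eqP => E; move: e2; rewrite E irr.
have n14 : u2 != w2 by apply/eqP => E; move: e3; rewrite E irr.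
have n15 : w2 != v2 by apply/eqP => E; move: e4; rewrite E irr.
exists u1, [:: w1; v1], u2, [:: w2; v2]; split; [split|split|] => //=;
  rewrite ?e1 ?e2 ?e3 ?e4 ?w1H ?w2H ?(inH sX1 u1X) ?(inH sY1 v1Y) ?(inH sX2 u2X) ?(inH sY2 v2Y) //.
uniqt.
Qed.

Lemma caseB : exists a1 q1 a2 q2, valid H X1 Y1 X2 Y2 a1 q1 a2 q2.
Proof.
have [u1 u1X] : exists u1, u1 \in X1 by apply/card_gt0P; lia.
have [v1 v1Y] : exists v1, v1 \in Y1 by apply/card_gt0P; lia.
have u1H := inH sX1 u1X; have v1H := inH sY1 v1Y.
have /andP[nuv1 nev1] := nl1 u1X v1Y.
have W13 := com3 u1H v1H nuv1 nev1.
have [v2 /and3P[v2Y n3 n4]] := avoid2 u1 v1 cY2.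
have v2H := inH sY2 v2Y.
have S : forall u2, u2 \in X2 -> (u2 != u1) && (u2 != v1) -> u2 \notin com e H u1 v1 ->
    exists a1 q1 a2 q2, valid H X1 Y1 X2 Y2 a1 q1 a2 q2.
  move=> u2 u2X /andP[n1 n2] nW.
  have u2H := inH sX2 u2X; have /andP[nuv2 nev2] := nl2 u2X v2Y.
  have [w2 /and3P[w2W n5 n6]] := avoid2 u1 v1 (com3 u2H v2H nuv2 nev2).
  have [w1 /and3P[w1W n7 n8]] := avoid2 v2 w2 W13.
  apply: (caseB_succ u1X v1Y u2X v2Y w1W w2W); rewrite ?n1 ?n2 ?n3 ?n4 ?n5 ?n6 ?n7 ?n8 //=.
  by rewrite andbT; apply/eqP => E; move: nW; rewrite -E w1W.
have [u2 /and3P[u2X n1 n2]] := avoid2 u1 v1 cX2.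
case: (boolP (u2 \in com e H u1 v1)) => u2W; last by apply: (S u2) => //; rewrite n1 n2.
have u2H := inH sX2 u2X; have /andP[nuv2 nev2] := nl2 u2X v2Y.
have W23 := com3 u2H v2H nuv2 nev2.
have [w1 /and3P[w1W n5 n6]] := avoid2 u2 v2 W13.
case: (boolP [exists w2, [&& w2 \in com e H u2 v2, w2 != u1, w2 != v1 & w2 != w1]]).
  move/existsP=> [w2 /and4P[w2W n7 n8 n9]].
  apply: (caseB_succ u1X v1Y u2X v2Y w1W w2W); by rewrite ?n1 ?n2 ?n3 ?n4 ?n5 ?n6 ?n7 ?n8 ?(eq_sym w1 w2) ?n9.
move/existsPn => hW2.
have sub2 : forall x, x \in com e H u2 v2 -> [|| x == u1, x == v1 | x == w1].
  move=> x xW; have := hW2 x; rewrite xW /=.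
  by case: (x == u1); case: (x == v1); case: (x == w1).
have w1W2 : w1 \in com e H u2 v2.
  apply: (in3 (b:=u1) (c:=v1) W23) => x /sub2; by case: (x == u1); case: (x == v1); case: (x == w1).
have w1nu1 : w1 != u1 by move: w1W; rewrite inE => /and3P[_ h _]; apply/eqP => E; move: h; rewrite E irr.
have w1nv1 : w1 != v1 by move: w1W; rewrite inE => /and3P[_ _ h]; apply/eqP => E; move: h; rewrite E irr.
case: (boolP [exists w, [&& w \in com e H u1 v1, w != u2, w != v2 & w != w1]]).
  move/existsP=> [w1' /and4P[w1'W n7 n8 n9]].
  apply: (caseB_succ u1X v1Y u2X v2Y w1'W w1W2); by rewrite ?n1 ?n2 ?n3 ?n4 ?n7 ?n8 ?n9 ?w1nu1 ?w1nv1.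
move/existsPn => hW1.
have u1W2 : u1 \in com e H u2 v2 by apply: (in3 (b:=v1) (c:=w1) W23) => x /sub2;
  by case: (x == u1); case: (x == v1); case: (x == w1).
have v1W2 : v1 \in com e H u2 v2 by apply: (in3 (b:=u1) (c:=w1) W23) => x /sub2;
  by case: (x == u1); case: (x == v1); case: (x == w1).
have notX2 : forall z, z \in com e H u2 v2 -> z \notin X2.
  move=> z; rewrite inE => /and3P[_ _ zv]; apply/negP => zX.
  by have := nl2 zX v2Y; rewrite zv andbF.
have [u2' /and3P[u2'X m1 m2]] := avoid2 u2 w1 cX2.
apply: (S u2') => //.
  apply/andP; split; apply/eqP => E; [move: (notX2 _ u1W2)|move: (notX2 _ v1W2)]; by rewrite -E u2'X.
apply/negP => u2'W; have := hW1 u2'; rewrite u2'W m1 m2 /= andbT.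
by have /andP[-> _] := nl2 u2'X v2Y.
Qed.

End CaseB.

End P1.


Lemma part1 (T : finType) (e : rel T) (H X1 Y1 X2 Y2 : {set T}) : irreflexive e -> dense e H ->
  X1 \subset H -> Y1 \subset H -> X2 \subset H -> Y2 \subset H ->
  2 < #|X1| -> 2 < #|Y1| -> 2 < #|X2| -> 2 < #|Y2| -> exists a1 q1 a2 q2, valid e H X1 Y1 X2 Y2 a1 q1 a2 q2.
Proof.
move=> irr D sX1 sY1 sX2 sY2 cX1 cY1 cX2 cY2.
case: (boolP [exists u, exists v, [&& u \in X1, v \in Y1 & (u == v) || e u v]]).
  move/existsP => [u /existsP[v /and3P[uX vY h]]]; exact: (caseA irr D sX1 sY1 sX2 sY2 cX2 cY2 uX vY h).
move/existsPn => h1.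
case: (boolP [exists u, exists v, [&& u \in X2, v \in Y2 & (u == v) || e u v]]).
  move/existsP => [u /existsP[v /and3P[uX vY h]]].
  have [a1 [q1 [a2 [q2 V]]]] := caseA irr D sX2 sY2 sX1 sY1 cX1 cY1 uX vY h.
  by exists a2, q2, a1, q1; apply: valid_sym.
move/existsPn => h2.
apply: (caseB irr D sX1 sY1 sX2 sY2 cX1 cY1 cX2 cY2).
  move=> u v uX vY; have /existsPn/(_ v) := h1 u; rewrite uX vY /= negb_or.
  by case/andP => -> ->.
move=> u v uX vY; have /existsPn/(_ v) := h2 u; rewrite uX vY /= negb_or.
by case/andP => -> ->.
Qed.


Lemma path_split (T : eqType) (R : rel T) a q : ~~ path R a q ->
  exists l1 y l2, q = l1 ++ y :: l2 /\ ~~ R (last a l1) y.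
Proof.
elim: q a => [|y q IH] a //=; case: (boolP (R a y)) => /= Ray np.
  have [l1 [z [l2 [-> h]]]] := IH y np; by exists (y :: l1), z, l2.
by exists [::], y, q.
Qed.

Lemma pigeon (T : eqType) (P Q : pred T) a q :
  path (fun x y => ~~ (P x && Q y)) a q -> count P (a :: q) + count Q (a :: q) <= size q + 2.
Proof.
suff : path (fun x y => ~~ (P x && Q y)) a q -> count P (a :: q) + count Q q <= size q + 1.
  by move=> h /h /=; case: (Q a) => /=; lia.
elim: q a => [|y q IH] a /=; first by case: (P a).
case/andP => h /IH /=; move: h; case: (P a); case: (Q y) => //=; lia.
Qed.

Lemma arith1 h wS S d1 d2 c : h = wS + S -> h < d1 + d2 -> d1 < S -> d2 < wS + c -> c <= 2 -> False.
Proof. lia. Qed.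
Lemma arith2 h S d1 d2 : h < d1 + d2 -> d1 < S -> d2 < S -> h + 3 <= 2 * S.
Proof. lia. Qed.

Section P2.
Variables (T : finType) (e : rel T) (H : {set T}).
Hypothesis irr : irreflexive e.

Definition Wset (S : seq T) := [set x in H | x \notin S].

Lemma ins_contra X1 Y1 X2 Y2 a1 q1 a2 q2 l1 y l2 w r :
  valid e H X1 Y1 X2 Y2 a1 q1 a2 q2 ->
  (forall b1 r1 b2 r2, valid e H X1 Y1 X2 Y2 b1 r1 b2 r2 -> size r1 + size r2 <= size q1 + size q2) ->
  q1 = l1 ++ y :: l2 -> path e w r -> uniq (w :: r) ->
  all (fun x => x \in Wset ((a1 :: q1) ++ (a2 :: q2))) (w :: r) ->
  e (last a1 l1) w -> e (last w r) y -> False.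
Proof.
move=> [[a1X l1Y p1 h1] h2 u] NA Eq pr ur aW ew ey.
have := NA a1 (l1 ++ w :: r ++ y :: l2) a2 q2.
rewrite Eq !size_cat /= size_cat /=.
suff V : valid e H X1 Y1 X2 Y2 a1 (l1 ++ w :: r ++ y :: l2) a2 q2 by move/(_ V); lia.
subst q1; split => //.
- split => //.
  + by move: l1Y; rewrite !last_cat /= last_cat.
  + move: p1; rewrite !cat_path /= cat_path /= => /andP[-> /andP[_ ->]].
    by rewrite ew pr ey.
  + move: h1 aW; rewrite /= !all_cat /= all_cat /= => /andP[-> /andP[-> /andP[-> ->]]].
    by rewrite !andbT => /andP[]; rewrite !inE => /andP[-> _] /allP al; apply/allP => z /al; rewrite inE => /andP[].
- have pe : perm_eq ((a1 :: l1) ++ (w :: r) ++ (y :: l2 ++ a2 :: q2))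
                     ((w :: r) ++ (a1 :: l1) ++ (y :: l2 ++ a2 :: q2)) by apply/permPl; apply: perm_catCA.
  have -> : (a1 :: l1 ++ w :: r ++ y :: l2) ++ a2 :: q2 = (a1 :: l1) ++ (w :: r) ++ (y :: l2 ++ a2 :: q2).
    by rewrite /= -?catA /= -?catA /= -?catA.
  rewrite (perm_uniq pe).
  rewrite cat_uniq ur.
  have -> : uniq (a1 :: l1 ++ y :: l2 ++ a2 :: q2) by move: u; rewrite /= -catA.
  rewrite andbT; apply/hasPn => z zS; apply/negP => zr.
  move/allP: aW => /(_ z zr); rewrite inE => /andP[_].
  by rewrite /= -catA /= zS.
Qed.


Lemma allW_H S (r : seq T) : all (fun x => x \in Wset S) r -> all (fun x => x \in H) r.
Proof. by move/allP => al; apply/allP => z /al; rewrite inE => /andP[]. Qed.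

Lemma uniqW S (r : seq T) : uniq r -> uniq S -> all (fun x => x \in Wset S) r -> uniq (r ++ S).
Proof.
move=> ur uS aW; rewrite cat_uniq ur uS andbT; apply/hasPn => z zS; apply/negP => zr.
by move/allP: aW => /(_ z zr); rewrite inE zS andbF.
Qed.

Lemma pre_contra X1 Y1 X2 Y2 a1 q1 a2 q2 w r :
  valid e H X1 Y1 X2 Y2 a1 q1 a2 q2 ->
  (forall b1 r1 b2 r2, valid e H X1 Y1 X2 Y2 b1 r1 b2 r2 -> size r1 + size r2 <= size q1 + size q2) ->
  w \in X1 -> path e w r -> uniq (w :: r) ->
  all (fun x => x \in Wset ((a1 :: q1) ++ (a2 :: q2))) (w :: r) ->
  e (last w r) a1 -> False.
Proof.
move=> [[a1X l1Y p1 h1] h2 u] NA wX pr ur aW ew.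
have := NA w (r ++ a1 :: q1) a2 q2; rewrite size_cat /=.
suff V : valid e H X1 Y1 X2 Y2 w (r ++ a1 :: q1) a2 q2 by move/(_ V); lia.
split => //.
- split => //.
  + by rewrite last_cat.
  + by rewrite cat_path /= ew pr p1.
  + by rewrite -cat_cons all_cat (allW_H aW) h1.
- by rewrite -cat_cons -catA; apply: uniqW.
Qed.

Lemma suf_contra X1 Y1 X2 Y2 a1 q1 a2 q2 w r :
  valid e H X1 Y1 X2 Y2 a1 q1 a2 q2 ->
  (forall b1 r1 b2 r2, valid e H X1 Y1 X2 Y2 b1 r1 b2 r2 -> size r1 + size r2 <= size q1 + size q2) ->
  last w r \in Y1 -> path e w r -> uniq (w :: r) ->
  all (fun x => x \in Wset ((a1 :: q1) ++ (a2 :: q2))) (w :: r) ->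
  e (last a1 q1) w -> False.
Proof.
move=> [[a1X l1Y p1 h1] h2 u] NA wY pr ur aW ew.
have := NA a1 (q1 ++ w :: r) a2 q2; rewrite size_cat /=.
suff V : valid e H X1 Y1 X2 Y2 a1 (q1 ++ w :: r) a2 q2 by move/(_ V); lia.
split => //.
- split => //.
  + by rewrite last_cat.
  + by rewrite cat_path /= ew pr p1.
  + by rewrite -cat_cons all_cat (allW_H aW) h1.
- have pe : perm_eq ((a1 :: q1) ++ (w :: r) ++ (a2 :: q2))
                     ((w :: r) ++ (a1 :: q1) ++ (a2 :: q2)) by apply/permPl; apply: perm_catCA.
  rewrite -cat_cons -catA (perm_uniq pe); exact: uniqW.
Qed.


Lemma allO_q (o i : pred T) a q : path (fun x y => ~~ (o x && i y)) a q -> all o (a :: q) -> all (predC i) q.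
Proof.
elim: q a => [|y q IH] a //= /andP[h p] /andP[oa /andP[oy al]].
by move: h; rewrite oa /= => -> /=; apply: (IH y p); rewrite /= oy.
Qed.

Lemma allI_q (o i : pred T) a q : path (fun x y => ~~ (o x && i y)) a q -> all i (a :: q) -> all (predC o) (belast a q).
Proof.
elim: q a => [|y q IH] a //= /andP[h p] /andP[ia /andP[iy al]].
by move: h; rewrite iy andbT => -> /=; apply: (IH y p); rewrite /= iy.
Qed.

Lemma cnt0 (P : pred T) q : all (predC P) q -> count P q = 0.
Proof. by elim: q => //= y q IH /andP[/negbTE -> /IH ->]. Qed.

Lemma cnt_belast (P : pred T) a q : all (predC P) (belast a q) -> count P (a :: q) <= 1.
Proof. by move=> h; rewrite lastI -cats1 count_cat (cnt0 h) /=; case: (P _). Qed.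

Lemma Wset_sym (s1 s2 : seq T) : Wset (s1 ++ s2) = Wset (s2 ++ s1).
Proof. by apply/setP => x; rewrite !inE !mem_cat orbC. Qed.

Lemma main2 (X1 Y1 X2 Y2 : {set T}) (a1 a2 : T) (q1 q2 : seq T) : dense e H -> X1 \subset H -> Y1 \subset H ->
  2 < #|X1| -> 2 < #|Y1| ->
  valid e H X1 Y1 X2 Y2 a1 q1 a2 q2 ->
  (forall b1 r1 b2 r2, valid e H X1 Y1 X2 Y2 b1 r1 b2 r2 -> size r1 + size r2 <= size q1 + size q2) ->
  #|H| + 3 <= 2 * (size q1 + size q2 + 2).
Proof.
move=> D sX1 sY1 cX1 cY1 V NA.
set S := (a1 :: q1) ++ (a2 :: q2).
set W := Wset S.
have V2 := valid_sym V.
have NA2 : forall b1 r1 b2 r2, valid e H X2 Y2 X1 Y1 b1 r1 b2 r2 -> size r1 + size r2 <= size q2 + size q1.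
  by move=> b1 r1 b2 r2 /valid_sym /NA; lia.
have SH : all (fun x => x \in H) S.
  by case: V => [[_ _ _ h1] [_ _ _ h2] _]; rewrite all_cat h1 h2.
have uS : uniq S by case: V.
have sS : size S = size q1 + size q2 + 2 by rewrite /S size_cat /=; lia.
have ins1 : forall l1 y l2 w w', q1 = l1 ++ y :: l2 -> w \in W -> w' \in W ->
    connect (rW e W) w w' -> e (last a1 l1) w -> e w' y -> False.
  move=> l1 y l2 w w' E wW w'W c ew ew'.
  have [r [pr lr ur sr]] := connect_path wW c.
  apply: (ins_contra V NA E pr ur) ew _; last by rewrite lr.
  by apply/allP.
have ins2 : forall l1 y l2 w w', q2 = l1 ++ y :: l2 -> w \in W -> w' \in W ->
    connect (rW e W) w w' -> e (last a2 l1) w -> e w' y -> False.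
  move=> l1 y l2 w w' E wW w'W c ew ew'.
  have [r [pr lr ur sr]] := connect_path wW c.
  apply: (ins_contra V2 NA2 E pr ur) ew _; last by rewrite lr.
  by rewrite -Wset_sym; apply/allP.
have card_dec : forall P : pred T, #|[set x in H | P x]| = #|[set x in W | P x]| + count P S.
  move=> P; rewrite (card_split (fun x => x \in S)) addnC; congr (_ + _).
    by apply: eq_card => x; rewrite /W /Wset !in_set; case: (x \in S); case: (x \in H).
  rewrite card_seq_pred //; apply: eq_in_count => x xS /=.
  by move/allP: SH => /(_ x xS) ->.
have cH : #|H| = #|W| + size S.
  have -> : #|H| = #|[set x in H | predT x]| by apply: eq_card => x; rewrite !in_set andbT.
  by rewrite card_dec count_predT; congr (_ + _); apply: eq_card => x; rewrite /W /Wset !in_set andbT.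
have WH : forall z, z \in W -> z \in H by move=> z; rewrite /W /Wset in_set => /andP[].
have hypSC : forall w w', w \in W -> w' \in W -> connect (rW e W) w w' ->
    #|W| <= din e W w + dout e W w' + 1.
  move=> w w' wW w'W c.
  have hD := D _ _ (WH _ w'W) (WH _ wW).
  rewrite /din /dout (card_dec (fun x => e x w)) (card_dec (e w')) in hD.
  have p1 : path (fun x y => ~~ (e x w && e w' y)) a1 q1.
    case: (boolP (path _ a1 q1)) => // /path_split [l1 [y [l2 [E /negPn /andP[h1 h2]]]]].
    by case: (ins1 _ _ _ _ _ E wW w'W c h1 h2).
  have p2 : path (fun x y => ~~ (e x w && e w' y)) a2 q2.
    case: (boolP (path _ a2 q2)) => // /path_split [l1 [y [l2 [E /negPn /andP[h1 h2]]]]].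
    by case: (ins2 _ _ _ _ _ E wW w'W c h1 h2).
  have c1 := pigeon p1; have c2 := pigeon p2.
  have cS : count (fun x => e x w) S + count (e w') S <= size q1 + size q2 + 4.
    rewrite /S !count_cat addnACA; apply: leq_trans (leq_add c1 c2) _; by rewrite addnACA.
  move: hD cS; rewrite cH sS -/(din e W w) -/(dout e W w').
  move: (count _ S) (count _ S) (din e W w) (dout e W w') #|W| => n1 n2 n3 n4 n5; lia.
have conW := SC irr hypSC.
pose o x := [exists w, (w \in W) && e x w].
pose i x := [exists w, (w \in W) && e w x].
have nOI1 : path (fun x y => ~~ (o x && i y)) a1 q1.
  case: (boolP (path _ a1 q1)) => // /path_split [l1 [y [l2 [E /negPn /andP[]]]]].
  move=> /existsP[w /andP[wW h1]] /existsP[w' /andP[w'W h2]].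
  by case: (ins1 _ _ _ _ _ E wW w'W (conW _ _ wW w'W) h1 h2).
have nOI2 : path (fun x y => ~~ (o x && i y)) a2 q2.
  case: (boolP (path _ a2 q2)) => // /path_split [l1 [y [l2 [E /negPn /andP[]]]]].
  move=> /existsP[w /andP[wW h1]] /existsP[w' /andP[w'W h2]].
  by case: (ins2 _ _ _ _ _ E wW w'W (conW _ _ wW w'W) h1 h2).
have cntlt : forall x (P : pred T), x \in S -> ~~ P x -> count P S < size S.
  move=> x P xS nP; have := count_predC P S.
  have : 0 < count (predC P) S by rewrite -has_count; apply/hasP; exists x.
  lia.
have boundO : forall x, x \in S -> ~~ o x -> dout e H x < size S.
  move=> x xS nox; rewrite /dout card_dec.
  have -> : #|[set w in W | e x w]| = 0.
    apply/eqP; rewrite cards_eq0; apply/eqP/setP => w; rewrite in_set in_set0.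
    by apply/negbTE; apply: contra nox => h; apply/existsP; exists w.
  by apply: (cntlt x) => //=; rewrite irr.
have boundI : forall x, x \in S -> ~~ i x -> din e H x < size S.
  move=> x xS nix; rewrite /din card_dec.
  have -> : #|[set w in W | e w x]| = 0.
    apply/eqP; rewrite cards_eq0; apply/eqP/setP => w; rewrite in_set in_set0.
    by apply/negbTE; apply: contra nix => h; apply/existsP; exists w.
  by apply: (cntlt x) => //=; rewrite irr.
have boundWo : forall w, w \in W -> dout e H w < #|W| + count i S.
  move=> w wW; rewrite /dout card_dec; have := dout_le irr wW.
  have : count (e w) S <= count i S.
    by apply: sub_count => x /= h; apply/existsP; exists w; rewrite wW.
  rewrite /dout; lia.
have boundWi : forall w, w \in W -> din e H w < #|W| + count o S.
  move=> w wW; rewrite /din card_dec; have := din_le irr wW.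
  have : count (e^~ w) S <= count o S.
    by apply: sub_count => x /= h; apply/existsP; exists w; rewrite wW.
  rewrite /din; lia.
have Sa1 : a1 \in S by rewrite mem_cat inE eqxx.
have Sa2 : a2 \in S by rewrite mem_cat !inE eqxx orbT.
have SHx : forall x, x \in S -> x \in H by move=> x /(allP SH).
case: (boolP (all o S)) => [allO|/allPn[x xS nox]].
  have [allO1 allO2] : all o (a1 :: q1) /\ all o (a2 :: q2) by move: allO; rewrite all_cat => /andP[].
  have nI1 := allO_q nOI1 allO1; have nI2 := allO_q nOI2 allO2.
  have ciS : count i S <= 2.
    by rewrite /S count_cat /= (cnt0 nI1) (cnt0 nI2); case: (i a1); case: (i a2).
  have [w wW ew] : exists2 w, w \in W & e a1 w.
    by have /existsP[w /andP[]] := allP allO1 a1 (mem_head _ _); exists w.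
  have key : forall y, y \in S -> ~~ i y -> False.
    move=> y yS niy; have hD := D _ _ (WH _ wW) (SHx _ yS).
    exact: (arith1 cH hD (boundI _ yS niy) (boundWo _ wW) ciS).
  case E1: q1 => [|y1 r1].
    case E2: q2 => [|y2 r2].
      have [y /and3P[yY n1 n2]] := avoid2 a1 a2 cY1.
      have yW : y \in W.
        by rewrite /W /Wset in_set (inH sY1 yY) /S E1 E2 !inE (negbTE n1) (negbTE n2).
      have [r [pr lr ur sr]] := connect_path wW (conW _ _ wW yW).
      exfalso; apply: (suf_contra V NA _ pr ur _); first by rewrite lr.
        by apply/allP.
      by rewrite E1.
    have y2S : y2 \in S by rewrite /S mem_cat E2 !inE eqxx !orbT.
    by case: (key y2 y2S); apply: (allP nI2); rewrite E2 mem_head.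
  have y1S : y1 \in S by rewrite /S mem_cat E1 !inE eqxx !orbT.
  by case: (key y1 y1S); apply: (allP nI1); rewrite E1 mem_head.
case: (boolP (all i S)) => [allI|/allPn[x' x'S nix]].
  have [allI1 allI2] : all i (a1 :: q1) /\ all i (a2 :: q2) by move: allI; rewrite all_cat => /andP[].
  have nO1 := allI_q nOI1 allI1; have nO2 := allI_q nOI2 allI2.
  have coS : count o S <= 2.
    rewrite /S count_cat; apply: leq_trans (leq_add (cnt_belast nO1) (cnt_belast nO2)) _; by [].
  have key : forall a, a \in S -> ~~ o a -> i a -> False.
    move=> a aS noa /existsP[w /andP[wW ew]].
    have hD := D _ _ (SHx _ aS) (WH _ wW); rewrite addnC in hD.
    exact: (arith1 cH hD (boundO _ aS noa) (boundWi _ wW) coS).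
  case E1: q1 => [|y1 r1].
    case E2: q2 => [|y2 r2].
      have [w wW ew] : exists2 w, w \in W & e w a1.
        by have /existsP[w /andP[]] := allP allI1 a1 (mem_head _ _); exists w.
      have [z /and3P[xX n1 n2]] := avoid2 a1 a2 cX1.
      have xW : z \in W.
        by rewrite /W /Wset in_set (inH sX1 xX) /S E1 E2 !inE (negbTE n1) (negbTE n2).
      have [r [pr lr ur sr]] := connect_path xW (conW _ _ xW wW).
      exfalso; apply: (pre_contra V NA xX pr ur); first by apply/allP.
      by rewrite lr.
    exfalso; apply: (key a2 Sa2); first by apply: (allP nO2); rewrite E2 /= mem_head.
    exact: (allP allI2 a2 (mem_head _ _)).
  exfalso; apply: (key a1 Sa1); first by apply: (allP nO1); rewrite E1 /= mem_head.
  exact: (allP allI1 a1 (mem_head _ _)).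
rewrite -sS; apply: (arith2 (D _ _ (SHx _ xS) (SHx _ x'S))).
  exact: boundI.
exact: boundO.
Qed.


Lemma valid_bound (X1 Y1 X2 Y2 : {set T}) a1 q1 a2 q2 : valid e H X1 Y1 X2 Y2 a1 q1 a2 q2 ->
  size q1 + size q2 + 2 <= #|H|.
Proof.
case=> [[_ _ _ h1] [_ _ _ h2] u].
have : (a1 :: q1) ++ (a2 :: q2) \subset H.
  by apply/subsetP => x; rewrite mem_cat => /orP[] x1; [apply: (allP h1)|apply: (allP h2)].
move/subset_leq_card; rewrite (card_uniqP u) size_cat /=; lia.
Qed.

Lemma part2 (X1 Y1 X2 Y2 : {set T}) a1 q1 a2 q2 : dense e H -> X1 \subset H -> Y1 \subset H ->
  2 < #|X1| -> 2 < #|Y1| -> valid e H X1 Y1 X2 Y2 a1 q1 a2 q2 ->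
  exists b1 r1 b2 r2, valid e H X1 Y1 X2 Y2 b1 r1 b2 r2 /\ #|H| + 3 <= 2 * (size r1 + size r2 + 2).
Proof.
move=> D sX1 sY1 cX1 cY1.
move: {2}(#|H| - (size q1 + size q2)) (leqnn (#|H| - (size q1 + size q2))) => k.
elim: k a1 q1 a2 q2 => [|k IH] a1 q1 a2 q2 hk V.
  have := valid_bound V; lia.
case: (Classical_Prop.classic (exists b1 r1 b2 r2, valid e H X1 Y1 X2 Y2 b1 r1 b2 r2 /\
          size q1 + size q2 < size r1 + size r2)).
  move=> [b1 [r1 [b2 [r2 [V' lt]]]]]; apply: (IH b1 r1 b2 r2) => //.
  have := valid_bound V'; lia.
move=> NA; exists a1, q1, a2, q2; split => //; apply: (main2 D sX1 sY1 cX1 cY1 V).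
move=> b1 r1 b2 r2 V'; rewrite leqNgt; apply/negP => lt; apply: NA.
by exists b1, r1, b2, r2.
Qed.

End P2.

Section Found.
Variables (T : finType) (e : rel T) (s : seq T).

Lemma subseq_ins (v : T) p q : subseq (v :: q) (v :: p ++ q).
Proof. exact: (cat_subseq (subseq_refl [:: v]) (suffix_subseq p q)). Qed.

Lemma S_rot i c0 : S_cycle e s c0 -> S_cycle e s (rot i c0).
Proof.
case=> /and3P[u sz cy] [j sj]; split.
  by rewrite /dcycle rot_uniq size_rot rot_cycle u sz cy.
exists (rot_add (rot i c0) (size (rot i c0) - i) j).
by rewrite -rot_rot_add -/(rotr i (rot i c0)) rotK.
Qed.

Lemma S_insert v q a r : S_cycle e s (v :: q) -> path e a r -> uniq (a :: r) ->
  all (fun x => x \notin v :: q) (a :: r) -> e v a -> e (last a r) (head v q) ->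
  S_cycle e s (v :: a :: r ++ q).
Proof.
case=> /and3P[u sz cy] [j sj] pr ur al ev el.
case: q u sz cy sj el al => [|y q] // u sz cy sj el al.
split.
  apply/and3P; split => //.
    have pe : perm_eq ([:: v] ++ (a :: r) ++ (y :: q)) ((a :: r) ++ [:: v] ++ (y :: q)).
      by apply/permPl; apply: perm_catCA.
    rewrite -cat1s -cat_cons (perm_uniq pe) cat_uniq ur cat1s u andbT.
    apply/hasPn => z; rewrite !inE => zz; apply/negP => zr.
    by move/allP: al => /(_ z zr); rewrite !inE zz.
  move: cy; rewrite /cycle /= rcons_cat cat_path /= => /andP[ev' pq].
  by rewrite ev pr el pq.
have pfx : forall j', rot j'.+1 (v :: y :: q) = drop j' (y :: q) ++ v :: take j' (y :: q).
  by move=> j'; rewrite /rot.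
case: (leqP j (size (y :: q))) => hj; last first.
  exists 0; rewrite rot0; apply: subseq_trans sj _.
  rewrite rot_oversize //; exact: (subseq_ins v (a :: r) (y :: q)).
case: j sj hj => [|j'] sj hj.
  exists 0; rewrite rot0; apply: subseq_trans sj _.
  rewrite rot0; exact: (subseq_ins v (a :: r) (y :: q)).
exists (j'.+1 + size (a :: r)); apply: subseq_trans sj _.
rewrite pfx /rot addSn /= -cat_cons drop_cat take_cat ltnNge leq_addl /= addnK.
apply: cat_subseq => //; exact: (subseq_ins v (a :: r) (take j' (y :: q))).
Qed.


Lemma meet (Z X Y : {set T}) : X \subset Z -> Y \subset Z -> #|Z| < #|X| + #|Y| ->
  exists z, (z \in X) && (z \in Y).
Proof.
move=> XW YW h; case: (boolP [exists z, (z \in X) && (z \in Y)]) => [/existsP//|/existsPn H0].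
have I0 : X :&: Y = set0 by apply/setP => z; rewrite in_setI in_set0; apply/negbTE; apply: H0.
have := cardsU X Y; rewrite I0 cards0 subn0 => hU.
have : X :|: Y \subset Z by rewrite subUset XW YW.
move/subset_leq_card; lia.
Qed.

Lemma in_out_bound c a r : S_cycle e s c -> (forall c', S_cycle e s c' -> size c' <= size c) ->
  path e a r -> uniq (a :: r) -> all (fun x => x \notin c) (a :: r) ->
  #|[set x | (x \in c) && e x a]| + #|[set x | (x \in c) && e (last a r) x]| <= size c.
Proof.
move=> Sc long pr ur al.
have uc : uniq c by case: Sc => /and3P[].
set b := last a r.
pose A := [set x | (x \in c) && e x a].
pose B := [set x | (x \in c) && e b (next c x)].
have cB : #|[set x | (x \in c) && e b x]| = #|B|.
  rewrite -[#|B|](card_imset _ (can_inj (prev_next uc))); apply: eq_card => x.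
  rewrite [X in X = _]inE; apply/idP/imsetP.
    move=> /andP[xc ebx]; exists (prev c x); last by rewrite next_prev.
    by rewrite inE mem_prev xc next_prev.
  by case=> y; rewrite inE => /andP[yc eb] ->; rewrite mem_next yc.
rewrite leqNgt cB; apply/negP => h.
have [v /andP[vA vB]] : exists v, (v \in A) && (v \in B).
  apply: (meet (Z := [set x in c])).
  - by apply/subsetP => x; rewrite !inE => /andP[].
  - by apply/subsetP => x; rewrite !inE => /andP[].
  - by rewrite cardsE (card_uniqP uc).
move: vA vB; rewrite !inE => /andP[vc eva] /andP[_ ebn].
case: (rot_to vc) => i q E.
have Sq := S_rot i Sc; rewrite E in Sq.
have nx : next c v = head v q.
  rewrite -(next_rot i uc) E; case: q {E Sq} => [|y q] /=; by rewrite eqxx.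
have al' : all (fun x => x \notin v :: q) (a :: r).
  by apply/allP => x /(allP al); rewrite -E mem_rot.
have el : e (last a r) (head v q) by rewrite -nx.
have := long _ (S_insert Sq pr ur al' eva el).
by rewrite /= size_cat -(size_rot i c) E /=; lia.
Qed.

End Found.

Lemma arith3 n k L h Ca Cb di do' : 3 <= k -> n = L + h -> (n + k).+1 %/ 2 - 1 <= Ca + di ->
  (n + k).+1 %/ 2 - 1 <= Cb + do' -> Ca + Cb <= L -> h < di + do'.
Proof. lia. Qed.

Lemma dense_H (T : finType) (e : rel T) (k : nat) (s c : seq T) :
  3 <= k -> irreflexive e -> min_semideg_ge e ((#|T| + k).+1 %/ 2 - 1) ->
  S_cycle e s c -> (forall c', S_cycle e s c' -> size c' <= size c) ->
  dense e [set v | v \notin c].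
Proof.
move=> k3 irr md Sc long.
set H := [set v | v \notin c].
have uc : uniq c by case: Sc => /and3P[].
have cT : #|T| = size c + #|H|.
  have := card_split (fun x => x \in c) (fun _ => true).
  rewrite card_seq_pred // count_predT.
  have -> : #|[set x | x \notin c & true]| = #|H| by apply: eq_card => x; rewrite !inE andbT.
  move=> <-; rewrite -cardsT; apply: eq_card => x; by rewrite !inE.
have degin : forall v, indeg e v = #|[set x | (x \in c) && e x v]| + din e H v.
  move=> v; rewrite /indeg (card_split (fun x => x \in c)); congr (_ + _).
  by apply: eq_card => x; rewrite !inE.
have degout : forall v, outdeg e v = #|[set x | (x \in c) && e v x]| + dout e H v.
  move=> v; rewrite /outdeg (card_split (fun x => x \in c)); congr (_ + _).
  by apply: eq_card => x; rewrite !inE.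
have hyp : forall a b, a \in H -> b \in H -> connect (rW e H) a b -> #|H| < din e H a + dout e H b.
  move=> a b aH bH cn.
  have [r [pr lr ur sr]] := connect_path aH cn.
  have al : all (fun x => x \notin c) (a :: r) by apply/allP => x /sr; rewrite inE.
  have bd := in_out_bound Sc long pr ur al; rewrite lr in bd.
  have [_ hi] := md a; have [ho _] := md b.
  rewrite degin in hi; rewrite degout in ho.
  exact: (arith3 k3 cT hi ho bd).
have hyp' : forall a b, a \in H -> b \in H -> connect (rW e H) a b -> #|H| <= din e H a + dout e H b + 1.
  by move=> a b aH bH cn; rewrite addn1; apply: ltnW; apply: leqW; exact: hyp.
have con := SC irr hyp'.
move=> u v uH vH; exact: (hyp v u vH uH (con v u vH uH)).
Qed.

Lemma arith4 a b c d f g h i : a + (b + (c + d)) + (f + (g + (h + i))) =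
  a + (d + (f + i)) + (b + c + (g + h)).
Proof. lia. Qed.

Lemma arith5 a b : (a.+2).+1 + (b.+2).+1 = a + b + 6.
Proof. lia. Qed.

Lemma convert (T : finType) (e : rel T) (c : seq T) (x1 x2 y1 y2 : T) a1 q1 a2 q2 :
  x1 \in c -> x2 \in c -> y1 \in c -> y2 \in c -> uniq [:: x1; x2; y1; y2] ->
  valid e [set v | v \notin c] [set h | (h \notin c) && e x1 h] [set h | (h \notin c) && e h y1]
    [set h | (h \notin c) && e x2 h] [set h | (h \notin c) && e h y2] a1 q1 a2 q2 ->
  [/\ H_path e c x1 y1 (a1 :: q1), H_path e c x2 y2 (a2 :: q2),
      [disjoint (x1 :: rcons (a1 :: q1) y1) & (x2 :: rcons (a2 :: q2) y2)]
    & #|[set v | (v \in x1 :: rcons (a1 :: q1) y1) || (v \in x2 :: rcons (a2 :: q2) y2)]|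
       = size q1 + size q2 + 6].
Proof.
move=> x1c x2c y1c y2c u4 [[a1X l1Y p1 h1] [a2X l2Y p2 h2] uS].
move: a1X l1Y a2X l2Y; rewrite !inE => /andP[_ e1] /andP[_ e2] /andP[_ e3] /andP[_ e4].
have al1 : all (fun v => v \notin c) (a1 :: q1) by apply/allP => x /(allP h1); rewrite inE.
have al2 : all (fun v => v \notin c) (a2 :: q2) by apply/allP => x /(allP h2); rewrite inE.
set P1 := x1 :: rcons (a1 :: q1) y1.
set P2 := x2 :: rcons (a2 :: q2) y2.
have pe : perm_eq (P1 ++ P2) ([:: x1; y1; x2; y2] ++ ((a1 :: q1) ++ (a2 :: q2))).
  apply/permP => p; rewrite /P1 /P2 -!cats1 !count_cat /= !count_cat /= !addn0.
  exact: arith4.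
have u : uniq (P1 ++ P2).
  rewrite (perm_uniq pe) cat_uniq uS andbT.
  have -> : uniq [:: x1; y1; x2; y2].
    rewrite (perm_uniq (_ : perm_eq _ [:: x1; x2; y1; y2])) //.
    rewrite perm_cons; apply/permPl; exact: (perm_catCA [:: y1] [:: x2] [:: y2]).
  apply/hasPn => z zS; rewrite !inE; apply/negP => zz.
  have : z \notin c.
    move: zS; rewrite mem_cat => /orP[] zs; [exact: (allP al1)|exact: (allP al2)].
  by case/or4P: zz => /eqP ->; rewrite ?x1c ?x2c ?y1c ?y2c.
move: (u); rewrite cat_uniq => /and3P[uP1 nh uP2].
split.
- apply/and4P; split => //.
  by rewrite /= rcons_path p1 e1 e2.
- apply/and4P; split => //.
  by rewrite /= rcons_path p2 e3 e4.
- by rewrite disjoint_has has_sym.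
- have sz : size (P1 ++ P2) = size q1 + size q2 + 6.
    by rewrite size_cat /P1 /P2 /= !size_rcons /=; apply: arith5.
  rewrite -sz -(card_uniqP u); apply: eq_card => v; by rewrite in_set mem_cat.
Qed.

Theorem corollary12 (T : finType) (e : rel T) (k : nat) (s c : seq T)
    (x1 x2 y1 y2 : T) :
  3 <= k ->
  irreflexive e ->
  min_semideg_ge e ((#|T| + k).+1 %/ 2 - 1) ->
  size s = k -> uniq s ->
  S_cycle e s c ->
  (forall c', S_cycle e s c' -> size c' <= size c) ->
  size c < #|T| ->
  x1 \in Tset e c 3 -> x2 \in Tset e c 3 -> y1 \in Fset e c 3 -> y2 \in Fset e c 3 ->
  uniq [:: x1; x2; y1; y2] ->
  (exists q1 q2 : seq T,
      [/\ H_path e c x1 y1 q1, H_path e c x2 y2 q2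
        & [disjoint (x1 :: rcons q1 y1) & (x2 :: rcons q2 y2)]])
  /\
  (15 <= Hsize c ->
   x1 \in Tset e c 8 -> x2 \in Tset e c 8 -> y1 \in Fset e c 8 -> y2 \in Fset e c 8 ->
   exists q1 q2 : seq T,
      [/\ H_path e c x1 y1 q1, H_path e c x2 y2 q2,
          [disjoint (x1 :: rcons q1 y1) & (x2 :: rcons q2 y2)]
        & Hsize c <= 6 * #|[set v | (v \in x1 :: rcons q1 y1) || (v \in x2 :: rcons q2 y2)]|]).
Proof.
move=> k3 irr md _ _ Sc long _ x1T x2T y1F y2F u4.
have D := dense_H k3 irr md Sc long.
move: x1T x2T y1F y2F; rewrite !inE => /andP[x1c cX1] /andP[x2c cX2] /andP[y1c cY1] /andP[y2c cY2].
have sub : forall P : pred T, [set h | (h \notin c) && P h] \subset [set v | v \notin c].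
  by move=> P; apply/subsetP => x; rewrite !inE => /andP[].
have [a1 [q1 [a2 [q2 V]]]] := part1 irr D (sub _) (sub _) (sub _) (sub _) cX1 cY1 cX2 cY2.
split.
  have [h1 h2 h3 _] := convert x1c x2c y1c y2c u4 V.
  by exists (a1 :: q1), (a2 :: q2).
move=> _ _ _ _ _.
have [b1 [r1 [b2 [r2 [V' hb]]]]] := part2 irr D (sub _) (sub _) cX1 cY1 V.
have [h1 h2 h3 h4] := convert x1c x2c y1c y2c u4 V'.
exists (b1 :: r1), (b2 :: r2); split => //.
rewrite h4 /Hsize; move: hb; lia.
Qed.
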